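(* Let $(X,u)$ and $(Y,v)$ be Čech closure spaces, let $Y^X$ be the set of all continuous maps $(X,u)\to(Y,v)$, let $(f_\lambda)_{\lambda\in\Lambda}$ be a net in $Y^X$ and $f\in Y^X$. Then $(f_\lambda)$ converges continuously to $f$ if and only if for every $x\in X$ and every neighbourhood $V$ of $f(x)$ in $(Y,v)$ there exist a neighbourhood $U$ of $x$ in $(X,u)$ and $\lambda_0\in\Lambda$ such that $f_\lambda(U)\subset V$ for all $\lambda\ge\lambda_0$.
   Context: A Čech closure space $(X,u)$ is a set $X$ with an operator $u:\mathcal P(X)\to\mathcal P(X)$ satisfying $u(\emptyset)=\emptyset$, $A\subset u(A)$, and $u(A\cup B)=u(A)\cup u(B)$. The interior is $\mathrm{int}_u A=X\setminus u(X\setminus A)$; $U$ is a neighbourhood of $x$ if $x\in\mathrm{int}_uU$. A map $f:(X,u)\to(Y,v)$ is continuous if $f(u(A))\subset v(f(A))$ for all $A\subset X$. A net $(x_\mu)_{\mu\in M}$ converges to $x$ if for every neighbourhood $U$ of $x$ there is $\mu_0$ with $x_\mu\in U$ for all $\mu\ge\mu_0$. A net $(f_\lambda)_{\lambda\in\Lambda}$ in $Y^X$ converges continuously to $f\in Y^X$ if, whenever a net $(x_\mu)_{\mu\in M}$ converges to $x$ in $(X,u)$, the net $(f_\lambda(x_\mu))_{(\lambda,\mu)\in\Lambda\times M}$ (with $\Lambda\times M$ ordered coordinatewise) converges to $f(x)$ in $(Y,v)$. *)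

(* Defs.v *)
Set Implicit Arguments.

Definition set (X : Type) := X -> Prop.
Definition setU {X} (A B : set X) : set X := fun x => A x \/ B x.
Definition setC {X} (A : set X) : set X := fun x => ~ A x.
Definition set0 {X} : set X := fun _ => False.
Definition image {X Y} (f : X -> Y) (A : set X) : set Y :=
  fun y => exists x, A x /\ f x = y.

Record closure (X : Type) := Closure {
  cl : set X -> set X;
  cl_empty : forall x, ~ cl set0 x;
  cl_ext : forall (A : set X) x, A x -> cl A x;
  cl_union : forall (A B : set X) x, cl (setU A B) x <-> (cl A x \/ cl B x)
}.

Definition interior {X} (u : closure X) (A : set X) : set X :=
  fun x => ~ cl u (setC A) x.

Definition nbhd {X} (u : closure X) (x : X) (U : set X) : Prop :=
  interior u U x.

Definition continuous {X Y} (u : closure X) (v : closure Y) (f : X -> Y) :=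
  forall (A : set X) x, cl u A x -> cl v (image f A) (f x).

Record directed := Directed {
  dcar :> Type;
  dle : dcar -> dcar -> Prop;
  dle_refl : forall a, dle a a;
  dle_trans : forall a b c, dle a b -> dle b c -> dle a c;
  dle_dir : forall a b, exists c, dle a c /\ dle b c;
  dnonempty : inhabited dcar
}.

Definition net_conv {I X} (le : I -> I -> Prop) (u : closure X)
  (net : I -> X) (x : X) : Prop :=
  forall U, nbhd u x U -> exists i0, forall i, le i0 i -> U (net i).

Definition prod_le (L M : directed) (p q : L * M) : Prop :=
  dle L (fst p) (fst q) /\ dle M (snd p) (snd q).

Definition cont_conv {X Y} (u : closure X) (v : closure Y) {L : directed}
  (F : L -> X -> Y) (f : X -> Y) : Prop :=
  forall (M : directed) (xs : M -> X) (x : X),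
    net_conv (dle M) u xs x ->
    net_conv (prod_le L M) v (fun p => F (fst p) (xs (snd p))) (f x).

(* Main.v *)
Require Import Defs.
From Stdlib Require Import Classical ClassicalEpsilon FunctionalExtensionality PropExtensionality.

Lemma cl_mono {X} (u : closure X) (A B : set X) x :
  (forall y, A y -> B y) -> cl u A x -> cl u B x.
Proof.
  intros hAB hA.
  assert (E : B = setU A B).
  { apply functional_extensionality; intro y; apply propositional_extensionality.
    unfold setU; split; [auto | intros [h|h]; auto]. }
  rewrite E. apply (proj2 (cl_union u A B x)). auto.
Qed.

Lemma nbhd_inter {X} (u : closure X) x (U W : set X) :
  nbhd u x U -> nbhd u x W -> nbhd u x (fun y => U y /\ W y).
Proof.
  unfold nbhd, interior; intros hU hW hc.
  apply (cl_mono u _ (setU (setC U) (setC W)) x) in hc.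
  - apply (proj1 (cl_union u _ _ x)) in hc. tauto.
  - intros y hy. unfold setU, setC in *. apply NNPP; tauto.
Qed.

Lemma nbhd_full {X} (u : closure X) x : nbhd u x (fun _ => True).
Proof.
  unfold nbhd, interior; intro hc.
  apply (cl_mono u _ set0 x) in hc.
  - exact (cl_empty u x hc).
  - unfold setC; intros y hy; tauto.
Qed.

Lemma nbhd_mem {X} (u : closure X) x U : nbhd u x U -> U x.
Proof.
  unfold nbhd, interior; intro h. apply NNPP; intro hn. apply h.
  apply cl_ext. exact hn.
Qed.

Section M.
Context {X : Type} (u : closure X) (x : X) (L : directed).
Definition Mcar := ({U : set X | nbhd u x U} * L)%type.
Definition Mle (p q : Mcar) : Prop :=
  (forall y, proj1_sig (fst q) y -> proj1_sig (fst p) y) /\ dle L (snd p) (snd q).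
Lemma Mle_refl a : Mle a a.
Proof. split; [auto | apply dle_refl]. Qed.
Lemma Mle_trans a b c : Mle a b -> Mle b c -> Mle a c.
Proof.
  intros [h1 h2] [h3 h4]; split; [auto | eapply dle_trans; eauto].
Qed.
Lemma Mle_dir a b : exists c, Mle a c /\ Mle b c.
Proof.
  destruct a as [[U hU] l]; destruct b as [[W hW] m].
  destruct (dle_dir L l m) as [c [h1 h2]].
  exists (exist _ _ (nbhd_inter u x U W hU hW), c).
  unfold Mle; simpl; split; split; auto; intros y [? ?]; auto.
Qed.
Lemma Mne : inhabited Mcar.
Proof.
  destruct (dnonempty L) as [l]. constructor. exact (exist _ _ (nbhd_full u x), l).
Qed.
Definition Mdir : directed := @Directed Mcar Mle Mle_refl Mle_trans Mle_dir Mne.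
End M.

Theorem theorem2 (X Y : Type) (u : closure X) (v : closure Y) (L : directed)
  (F : L -> X -> Y) (f : X -> Y) :
  (forall l, continuous u v (F l)) -> continuous u v f ->
  (cont_conv u v F f <->
   forall (x : X) (V : set Y), nbhd v (f x) V ->
     exists (U : set X) (l0 : L), nbhd u x U /\
       forall l, dle L l0 l -> forall y, U y -> V (F l y)).
Proof.
  intros _ _. split.
  - intros H x V hV. apply NNPP; intro N.
    assert (bad : forall (mu : Mcar u x L), exists p : L * X,
               dle L (snd mu) (fst p) /\ proj1_sig (fst mu) (snd p) /\ ~ V (F (fst p) (snd p))).
    { intros [[U hU] l0]; simpl. apply NNPP; intro H1. apply N.
      exists U, l0; split; auto. intros l hl y hy. apply NNPP; intro. apply H1.
      exists (l, y); simpl; auto. }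
    pose (g := fun mu => proj1_sig (constructive_indefinite_description _ (bad mu))).
    assert (gs : forall mu, dle L (snd mu) (fst (g mu)) /\ proj1_sig (fst mu) (snd (g mu))
                            /\ ~ V (F (fst (g mu)) (snd (g mu)))).
    { intro mu. unfold g. exact (proj2_sig (constructive_indefinite_description _ (bad mu))). }
    assert (hc : net_conv (dle (Mdir u x L)) u (fun mu : Mdir u x L => snd (g mu)) x).
    { intros W hW. destruct (dnonempty L) as [l].
      exists (exist _ W hW, l). intros i [hi _]. apply hi. apply gs. }
    specialize (H (Mdir u x L) _ x hc V hV).
    destruct H as [[l1 [[U1 hU1] m1]] H].
    destruct (dle_dir L l1 m1) as [c [h1 h2]].
    pose (mu := (exist (fun U => nbhd u x U) U1 hU1, c) : Mdir u x L).
    destruct (gs mu) as [g1 [g2 g3]].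
    apply g3. apply (H (fst (g mu), mu)).
    split; simpl.
    + eapply dle_trans; [exact h1 | exact g1].
    + split; simpl; auto.
  - intros H M xs x hx V hV.
    destruct (H x V hV) as [U [l0 [hU HU]]].
    destruct (hx U hU) as [m0 hm0].
    exists (l0, m0). intros [l m] [h1 h2]; simpl in *. apply HU; auto.
Qed.
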